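(* Let $n$ be an odd integer. If the cycle $C_n$ admits an optimal extended irregular dominating set, then the cycle $C_{2n}$ also admits an optimal extended irregular dominating set.
   Context: $C_m$ is the cycle on $m$ vertices. In a finite simple graph $\Gamma=(V,E)$ with distance $d$, a vertex $v$ carrying a non-negative integer label $\ell$ dominates (covers) exactly the vertices $u$ with $d(u,v)=\ell$; a vertex labeled $0$ dominates only itself. For $k\ge0$, a $k$-extended irregular dominating set is a set $S\subseteq V$ of $k$ vertices with a labeling $\lambda:S\to\mathbb{Z}_{\ge0}$ with distinct labels, such that every vertex of $V$ is dominated by some vertex of $S$; it is assumed that some vertex of $S$ has label $0$. $\gamma_e(\Gamma)$ is the minimum cardinality of such a set; a $k$-extended irregular dominating set is optimal if $k=\gamma_e(\Gamma)$. *)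

(* Defs.v *)
From mathcomp Require Import all_boot.
Set Implicit Arguments. Unset Strict Implicit. Unset Printing Implicit Defensive.

Definition gdist (T : finType) (e : rel T) (u v : T) (d : nat) : Prop :=
  (exists p : seq T, [&& path e v p, last v p == u & size p == d]) /\
  (forall p : seq T, path e v p -> last v p = u -> d <= size p).

Definition dominates (T : finType) (e : rel T) (v : T) (l : nat) (u : T) : Prop :=
  gdist e u v l.

Definition ext_irr_dom (T : finType) (e : rel T) (S : {set T}) (lam : T -> nat) : Prop :=
  [/\ {in S &, injective lam},
      (exists2 v, v \in S & lam v = 0) &
      (forall u : T, exists2 v, v \in S & dominates e v (lam v) u)].

Definition optimal_eids (T : finType) (e : rel T) (S : {set T}) (lam : T -> nat) : Prop :=
  ext_irr_dom e S lam /\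
  (forall (S' : {set T}) (lam' : T -> nat), ext_irr_dom e S' lam' -> #|S| <= #|S'|).

Definition admits_optimal_eids (T : finType) (e : rel T) : Prop :=
  exists (S : {set T}) (lam : T -> nat), optimal_eids e S lam.

(* The cycle C_m on vertex set 'I_m (a cycle for m >= 3): i ~ j iff j = i+1 mod m
   or i = j+1 mod m. *)
Definition cycle_rel (m : nat) : rel 'I_m :=
  fun i j => (val j == (val i).+1 %% m) || (val i == (val j).+1 %% m).
Arguments cycle_rel m : clear implicits.

(* Main.v *)
Require Import Defs.
From mathcomp Require Import all_boot.
From mathcomp Require Import zify.
From Stdlib Require Import Classical.

Definition cong (m c j u : nat) : Prop :=
  (c + j = u %[mod m]) \/ (u + j = c %[mod m]).

Lemma cancel_l (m c a b : nat) : c + a = c + b %[mod m] -> a = b %[mod m].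
Proof. by move/eqP; rewrite eqn_modDl => /eqP. Qed.
Arguments cancel_l {m c a b}.

Lemma reach (m : nat) (c : 'I_m) (p : seq 'I_m) :
  path (cycle_rel m) c p ->
  exists j, j <= size p /\ cong m c j (last c p).
Proof.
elim: p c => [|x p IH] c /=.
  by move=> _; exists 0; split => //; left; rewrite addn0.
case/andP => hcx /IH [j [hj hc]].
have Hx := ltn_ord x; have Hc := ltn_ord c.
rewrite /cycle_rel in hcx.
case/orP: hcx => /eqP hx; simpl in hx.
- case: hc => hc.
  + exists j.+1; split; first by [].
    left; rewrite -hc hx modnDml. congr (_ %% _); lia.
  + case: j hj hc => [|j] hj hc.
    * exists 1; split => //; left. rewrite addn0 in hc. by rewrite hc (modn_small Hx) hx addn1.
    * exists j; split; first by lia.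
      right. apply: (@cancel_l m 1 _ _). have->: 1 + (last x p + j) = last x p + j.+1 by lia.
      by rewrite hc (modn_small Hx) hx addnC addn1.
- case: hc => hc.
  + case: j hj hc => [|j] hj hc.
    * exists 1; split => //; right. rewrite addn0 in hc.
      by rewrite -modnDml -hc modnDml addn1 -hx (modn_small Hc).
    * exists j; split; first by lia.
      left. rewrite -hc hx modnDml; congr (_ %% _); lia.
  + exists j.+1; split; first by [].
    right. rewrite hx modn_mod -[x.+1]addn1. rewrite -[(x + 1) %% m]modnDml -hc modnDml; congr (_ %% _); lia.
Qed.

Lemma walk_f (m : nat) (c : 'I_m) (j : nat) : exists p : seq 'I_m,
  [/\ path (cycle_rel m) c p, (nat_of_ord (last c p) = (c + j) %% m) & size p = j].
Proof.
have m0 : 0 < m by apply: leq_ltn_trans (ltn_ord c).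
elim: j => [|j [p [hp hl hs]]].
  by exists [::]; rewrite /= addn0 modn_small.
pose y := Ordinal (@ltn_pmod (last c p).+1 m m0).
exists (rcons p y); split.
- by rewrite rcons_path hp /= /cycle_rel /= eqxx.
- by rewrite last_rcons /= hl -[((c + j) %% m).+1]addn1 modnDml addnS; rewrite ?addn0 ?addnS.
- by rewrite size_rcons hs.
Qed.

Lemma walk_b (m : nat) (c : 'I_m) (j : nat) : exists p : seq 'I_m,
  [/\ path (cycle_rel m) c p, (nat_of_ord (last c p) + j = c %[mod m]) & size p = j].
Proof.
have m0 : 0 < m by apply: leq_ltn_trans (ltn_ord c).
elim: j => [|j [p [hp hl hs]]].
  by exists [::]; rewrite /= addn0.
pose y := Ordinal (@ltn_pmod (last c p + m.-1) m m0).
have hy : (nat_of_ord y).+1 %% m = nat_of_ord (last c p).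
  rewrite /= -addn1 modnDml -addnA addn1 prednK // modnDr modn_small //.
exists (rcons p y); split.
- by rewrite rcons_path hp /cycle_rel hy eqxx orbT.
- rewrite last_rcons -hl -hy modnDml; congr (_ %% _); lia.
- by rewrite size_rcons hs.
Qed.

Lemma cong_add (m x y k : nat) : x = y %[mod m] -> x + k = y + k %[mod m].
Proof. by move=> H; rewrite -modnDml H modnDml. Qed.
Arguments cong_add {m x y} k.

Lemma uniq_cong (m c u a b : nat) : 0 < m -> 2 * a <= m -> b < a ->
  cong m c a u -> cong m c b u -> False.
Proof.
move=> m0 ha hb [h1|h1] [h2|h2].
- have := cancel_l (etrans h1 (esym h2)).
  by rewrite !modn_small; lia.
- have h : c + (a + b) = c + 0 %[mod m].
    by rewrite addnA (cong_add b h1) h2 addn0.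
  by have := cancel_l h; rewrite mod0n modn_small; lia.
- have h : u + (a + b) = u + 0 %[mod m].
    by rewrite addnA (cong_add b h1) h2 addn0.
  by have := cancel_l h; rewrite mod0n modn_small; lia.
- have := cancel_l (etrans h1 (esym h2)).
  by rewrite !modn_small; lia.
Qed.

Lemma norm_cong (m c u j : nat) : 0 < m -> cong m c j u ->
  exists a, [/\ a <= j, 2 * a <= m & cong m c a u].
Proof.
move=> m0 hj.
have hj' : cong m c (j %% m) u.
  by case: hj => h; [left|right]; rewrite modnDmr.
have jl : j %% m <= j by apply: leq_mod.
have jm : j %% m < m by apply: ltn_pmod.
case: (leqP (2 * (j %% m)) m) => hle.
  by exists (j %% m); split.
exists (m - j %% m); split; [lia|lia|].
case: hj' => h; [right|left].
- rewrite -(cong_add _ h) -addnA subnKC; last by lia.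
  by rewrite modnDr.
- rewrite -(cong_add _ h) -addnA subnKC; last by lia.
  by rewrite modnDr.
Qed.

Arguments reach {m c p}.
Arguments walk_f {m}.
Arguments walk_b {m}.
Arguments norm_cong {m c u j}.
Arguments uniq_cong {m c u a b}.

Lemma gdist_cycle (m : nat) (u c : 'I_m) (r : nat) :
  gdist (cycle_rel m) u c r <-> 2 * r <= m /\ cong m c r u.
Proof.
have m0 : 0 < m by apply: leq_ltn_trans (ltn_ord c).
have hu := ltn_ord u.
split.
- case=> [[p /and3P [hp /eqP hl /eqP hs]] hmin].
  have [j [hj hc]] := reach hp.
  rewrite hl in hc.
  have [a [ha1 ha2 ha3]] := norm_cong m0 hc.
  have [q [hq hql hqs]] := walk_f c a.
  have [q' [hq' hql' hqs']] := walk_b c a.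
  have ra : r <= a.
    case: ha3 => h.
    + have e : last c q = u.
        by apply: val_inj; rewrite /= hql h modn_small.
      by rewrite -hqs; apply: hmin.
    + have e : last c q' = u.
        apply: val_inj; rewrite /=.
        have := cancel_l (m:=m) (c:=a) (a:=last c q') (b:=u).
        rewrite [a + _]addnC [a + u]addnC hql' h => /(_ erefl).
        by rewrite !modn_small.
      by rewrite -hqs'; apply: hmin.
  have ar : a <= r by rewrite -hs; apply: leq_trans ha1 hj.
  have -> : r = a by apply/eqP; rewrite eqn_leq ra ar.
  by split.
- case=> hr hc; split.
  + case: hc => h.
    * have [q [hq hql hqs]] := walk_f c r.
      exists q; rewrite hq hqs eqxx andbT /=; apply/eqP/val_inj.
      by rewrite /= hql h modn_small.
    * have [q [hq hql hqs]] := walk_b c r.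
      exists q; rewrite hq hqs eqxx andbT /=; apply/eqP/val_inj.
      have := cancel_l (m:=m) (c:=r) (a:=last c q) (b:=u).
      rewrite [r + _]addnC [r + u]addnC hql h => /(_ erefl).
      by rewrite !modn_small.
  + move=> p hp hl; rewrite leqNgt; apply/negP => hlt.
    have [j [hj hcj]] := reach hp.
    rewrite hl in hcj.
    apply: (uniq_cong m0 hr _ hc hcj).
    by apply: leq_ltn_trans hj hlt.
Qed.

Lemma lin1 (n x y A B : nat) : A = B %[mod n] -> x + B = y + A -> x = y %[mod n].
Proof.
move=> h e. apply: (@cancel_l n A). rewrite [A + x]addnC [A + y]addnC.
by rewrite -[in LHS]modnDmr h modnDmr e.
Qed.

Lemma csum (n a b c d : nat) : a = b %[mod n] -> c = d %[mod n] -> a + c = b + d %[mod n].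
Proof. by move=> h1 h2; rewrite -modnDm h1 h2 modnDm. Qed.

Arguments lin1 {n x y A B}.
Arguments csum {n a b c d}.

Lemma cn0 (n : nat) : n = 0 %[mod n].
Proof. by rewrite modnn mod0n. Qed.

Lemma cmod (n a : nat) : a %% n = a %[mod n].
Proof. by rewrite modn_mod. Qed.

Section Constr.
Variable n : nat.
Hypothesis nodd : odd n.
Hypothesis n3 : 3 <= n.
Variables (S : {set 'I_n}) (lam : 'I_n -> nat).
Hypothesis hS : ext_irr_dom (cycle_rel n) S lam.

Definition S' := [set v in S | 2 * lam v <= n].
Variable s : nat.
Hypothesis s_lt : s < n.
Hypothesis s_ok : forall v, v \in S' -> (v + v) %% n != s.

Lemma n0 : 0 < n. Proof. by apply: leq_trans n3. Qed.

Lemma inS' v : v \in S' -> v \in S /\ 2 * lam v < n.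
Proof.
rewrite inE => /andP [h1 h2]; split => //.
rewrite ltn_neqAle h2 andbT; apply/negP => /eqP e.
by move: nodd; rewrite -e oddM.
Qed.

Definition eps (v : 'I_n) : bool := [exists w in S', (w < v) && ((v + w) %% n == s)].
Definition rad (v : 'I_n) : nat := if odd (lam v) == eps v then lam v else n - lam v.
Definition emb (e : bool) (x : nat) : nat := if odd x == e then x else x + n.
Definition Av (v : 'I_n) : nat := emb (eps v) v.
Definition Bx (v : 'I_n) : nat := (s + n - v) %% n.
Definition Bv (v : 'I_n) : nat := emb (eps v) (Bx v).

Lemma emb_lt e x : x < n -> emb e x < 2 * n.
Proof. rewrite /emb; case: ifP => _; lia. Qed.

Lemma emb_mod e x : emb e x = x %[mod n].
Proof. by rewrite /emb; case: ifP => _ //; rewrite modnDr. Qed.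

Lemma emb_odd e x : odd (emb e x) = e.
Proof.
rewrite /emb; case: ifP => [/eqP //|]; rewrite oddD nodd.
by case: (odd x); case: e.
Qed.


Lemma rad_cases v : v \in S' ->
  [/\ rad v <= n, odd (rad v) = eps v & (rad v = lam v \/ rad v = n - lam v)].
Proof.
move=> /inS' [_ hl]; rewrite /rad; case: ifP => [/eqP h|h].
- split => //; [lia | by left].
- split; [lia | | by right].
  rewrite oddB; last by lia.
  by rewrite nodd; move: h; case: (odd _); case: (eps v).
Qed.

Arguments rad_cases {v}.
Arguments inS' {v}.

Lemma Bx_lt v : Bx v < n. Proof. exact: ltn_pmod n0. Qed.

Lemma Bx_sum (v : 'I_n) : Bx v + v = s %[mod n].
Proof.
have h1 : Bx v = s + n - v %[mod n] by rewrite /Bx modn_mod.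
apply: (lin1 (csum h1 (cn0 n))).
have := ltn_ord v; lia.
Qed.

Lemma col_aux (v w : 'I_n) : v \in S' -> w \in S' -> w < v -> (v + w) %% n = s ->
  eps v /\ ~~ eps w.
Proof.
move=> hv hw hlt e; split.
  by apply/existsP; exists w; rewrite hw hlt e eqxx.
apply/existsP => -[f /and3P [hf hfw /eqP e']].
have : w + f = w + v %[mod n] by rewrite e' addnC e.
move/cancel_l; rewrite !modn_small // => efv.
by move: hfw; rewrite efv => /(ltn_trans hlt); rewrite ltnn.
Qed.

Arguments col_aux {v w}.

Lemma col (v w : 'I_n) : v \in S' -> w \in S' -> (v + w) %% n = s -> eps v != eps w.
Proof.
move=> hv hw e.
case: (ltngtP v w) => h.
- have e' : (w + v) %% n = s by rewrite addnC.
  have [h1 h2] := col_aux hw hv h e'.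
  by move: h1 h2; case: (eps w); case: (eps v).
- have [h1 h2] := col_aux hv hw h e.
  by move: h1 h2; case: (eps w); case: (eps v).
- by have := s_ok v hv; rewrite {2}h e eqxx.
Qed.

Arguments col {v w}.

Lemma Av_inj (v w : 'I_n) : Av v = Av w -> v = w.
Proof.
move=> e; apply: val_inj => /=.
have := emb_mod (eps v) v; rewrite -/(Av v) e /Av emb_mod !modn_small //.
Qed.

Lemma Bv_inj (v w : 'I_n) : Bv v = Bv w -> v = w.
Proof.
move=> e.
have eb : Bx v = Bx w.
  have := emb_mod (eps v) (Bx v); rewrite -/(Bv v) e /Bv emb_mod.
  by rewrite !modn_small // Bx_lt.
have := etrans (Bx_sum v) (esym (Bx_sum w)).
rewrite eb => hh; have := cancel_l hh.
by rewrite !modn_small // => /val_inj.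
Qed.

Lemma AB_disj (v w : 'I_n) : v \in S' -> w \in S' -> Av v = Bv w -> False.
Proof.
move=> hv hw e.
have ev : nat_of_ord v = Bx w.
  have := emb_mod (eps v) v; rewrite -/(Av v) e /Bv emb_mod.
  by rewrite !modn_small // Bx_lt.
have es : (v + w) %% n = s by rewrite ev Bx_sum modn_small.
have := col hv hw es.
by have := emb_odd (eps v) v; rewrite -/(Av v) e /Bv emb_odd => ->; rewrite eqxx.
Qed.

Arguments AB_disj {v w}.
Arguments Av_inj {v w}.
Arguments Bv_inj {v w}.

Definition S2 : {set 'I_(2 * n)} :=
  [set y : 'I_(2 * n) | [exists v in S', (Av v == y :> nat) || (Bv v == y :> nat)]].
Definition lam2 (y : 'I_(2 * n)) : nat :=
  if [pick v in S' | Av v == y :> nat] is Some v then rad v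
  else if [pick v in S' | Bv v == y :> nat] is Some v then n - rad v else 0.

Lemma lam2A (v : 'I_n) (y : 'I_(2 * n)) : v \in S' -> Av v = y -> lam2 y = rad v.
Proof.
move=> hv e; rewrite /lam2; case: pickP => [v' /andP [hv' /eqP e'] | H].
  by rewrite (Av_inj (etrans e' (esym e))).
by have := H v; rewrite hv e eqxx.
Qed.

Lemma lam2B (v : 'I_n) (y : 'I_(2 * n)) : v \in S' -> Bv v = y -> lam2 y = n - rad v.
Proof.
move=> hv e; rewrite /lam2; case: pickP => [v' /andP [hv' /eqP e'] | _].
  by case: (AB_disj hv' hv (etrans e' (esym e))).
case: pickP => [v' /andP [hv' /eqP e'] | H].
  by rewrite (Bv_inj (etrans e' (esym e))).
by have := H v; rewrite hv e eqxx.
Qed.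


Arguments lam2A {v y}.
Arguments lam2B {v y}.

Lemma rad_eq (v w : 'I_n) : v \in S' -> w \in S' -> rad v = rad w -> v = w.
Proof.
move=> hv hw e.
have [_ _ c1] := rad_cases hv; have [_ _ c2] := rad_cases hw.
have [hvS l1] := inS' hv; have [hwS l2] := inS' hw.
case: hS => hinj _ _; apply: hinj => //.
by case: c1 => c1; case: c2 => c2; lia.
Qed.

Arguments rad_eq {v w}.

Lemma rad_sum (v w : 'I_n) : v \in S' -> w \in S' -> rad v = n - rad w -> False.
Proof.
move=> hv hw e.
have [r1 _ c1] := rad_cases hv; have [r2 _ c2] := rad_cases hw.
have [hvS l1] := inS' hv; have [hwS l2] := inS' hw.
have el : lam v = lam w by case: c1 => c1; case: c2 => c2; lia.
have evw : v = w by case: hS => hinj _ _; apply: hinj.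
subst w.
have : n = rad v + rad v by lia.
by move=> en; move: nodd; rewrite en oddD addbb.
Qed.

Arguments rad_sum {v w}.

Lemma lam2_inj : {in S2 &, injective lam2}.
Proof.
move=> y1 y2; rewrite !inE.
move=> /existsP [v1 /andP [hv1 /orP [/eqP e1|/eqP e1]]].
- move=> /existsP [v2 /andP [hv2 /orP [/eqP e2|/eqP e2]]].
  + rewrite (lam2A hv1 e1) (lam2A hv2 e2) => /(rad_eq hv1 hv2) ev.
    by apply: val_inj; rewrite /= -e1 -e2 ev.
  + rewrite (lam2A hv1 e1) (lam2B hv2 e2) => /(rad_sum hv1 hv2) [].
- move=> /existsP [v2 /andP [hv2 /orP [/eqP e2|/eqP e2]]].
  + rewrite (lam2B hv1 e1) (lam2A hv2 e2) => /esym /(rad_sum hv2 hv1) [].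
  + rewrite (lam2B hv1 e1) (lam2B hv2 e2) => e.
    have [r1 _ _] := rad_cases hv1; have [r2 _ _] := rad_cases hv2.
    have ev : v1 = v2 by apply: (rad_eq hv1 hv2); lia.
    by apply: val_inj; rewrite /= -e1 -e2 ev.
Qed.

Definition yA (v : 'I_n) : 'I_(2 * n) := Ordinal (emb_lt (eps v) _ (ltn_ord v)).
Definition yB (v : 'I_n) : 'I_(2 * n) := Ordinal (emb_lt (eps v) _ (Bx_lt v)).

Lemma yA_in v : v \in S' -> yA v \in S2.
Proof. by move=> hv; rewrite inE; apply/existsP; exists v; rewrite hv eqxx. Qed.
Lemma yB_in v : v \in S' -> yB v \in S2.
Proof. by move=> hv; rewrite inE; apply/existsP; exists v; rewrite hv eqxx orbT. Qed.

Lemma S2_zero : exists2 y, y \in S2 & lam2 y = 0.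
Proof.
case: hS => _ [v0 hv0 l0] _.
have hv : v0 \in S' by rewrite inE hv0 l0.
have [_ _ c] := rad_cases hv.
case: c => c.
- by exists (yA v0); [apply: yA_in | rewrite (lam2A (y := yA v0) hv erefl) c l0].
- by exists (yB v0); [apply: yB_in | rewrite (lam2B (y := yB v0) hv erefl) c l0 subn0 subnn].
Qed.

Lemma crt (a b : nat) : odd a = odd b -> a = b %[mod n] -> a = b %[mod 2 * n].
Proof.
move=> h1 h2; apply/eqP; rewrite chinese_remainder ?coprime2n //.
by rewrite !modn2 h1 h2 !eqxx.
Qed.


Lemma cover (u : 'I_(2 * n)) :
  exists2 y, y \in S2 & dominates (cycle_rel (2 * n)) y (lam2 y) u.
Proof.
have hn0 := n0.
have H5 := cn0 n.
case hu: (odd u).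
- pose x' : 'I_n := Ordinal (ltn_pmod (s + n - u %% n) hn0).
  case: hS => _ _ /(_ x') [v hvS].
  rewrite /dominates gdist_cycle => -[hl hc].
  have hv : v \in S' by rewrite inE hvS hl.
  exists (yB v); first exact: yB_in.
  rewrite (lam2B (y := yB v) hv erefl) /dominates gdist_cycle.
  have [rle rodd rc] := rad_cases hv.
  split; first by lia.
  have vy : nat_of_ord (yB v) = Bv v by [].
  have H1 : Bv v = Bx v %[mod n] by rewrite /Bv emb_mod.
  have H2 := Bx_sum v.
  have Hx1 : nat_of_ord x' = s + n - u %% n %[mod n] by rewrite /= modn_mod.
  have Hu : u = u %% n %[mod n] by rewrite modn_mod.
  have H3 : x' + u = s %[mod n].
    apply: (lin1 (csum Hx1 (csum Hu H5))).
    have : u %% n < n by apply: ltn_pmod.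
    rewrite /=; clear; lia.
  have oB : odd (Bv v) = eps v by rewrite /Bv emb_odd.
  have oR : odd (n - rad v) = ~~ eps v.
    by rewrite oddB // nodd rodd.
  rewrite /cong vy.
  case: hc => H4; case: rc => rc.
  + left; apply: crt; first by rewrite oddD oB oR hu; case: (eps v).
    apply: (lin1 (csum H1 (csum H2 (csum (esym H3) (csum (esym H4) H5))))).
    rewrite rc; clear -rc rle hl n3; lia.
  + right; apply: crt; first by rewrite oddD oB oR hu; case: (eps v).
    apply: (lin1 (csum (esym H1) (csum (esym H2) (csum H3 H4)))).
    rewrite rc; clear -rc rle hl n3; lia.
  + right; apply: crt; first by rewrite oddD oB oR hu; case: (eps v).
    apply: (lin1 (csum (esym H1) (csum (esym H2) (csum H3 (csum (esym H4) H5))))).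
    rewrite rc; clear -rc rle hl n3; lia.
  + left; apply: crt; first by rewrite oddD oB oR hu; case: (eps v).
    apply: (lin1 (csum H1 (csum H2 (csum (esym H3) H4)))).
    rewrite rc; clear -rc rle hl n3; lia.
- pose x : 'I_n := Ordinal (ltn_pmod u hn0).
  case: hS => _ _ /(_ x) [v hvS].
  rewrite /dominates gdist_cycle => -[hl hc].
  have hv : v \in S' by rewrite inE hvS hl.
  exists (yA v); first exact: yA_in.
  rewrite (lam2A (y := yA v) hv erefl) /dominates gdist_cycle.
  have [rle rodd rc] := rad_cases hv.
  split; first by lia.
  have vy : nat_of_ord (yA v) = Av v by [].
  have H1 : Av v = v %[mod n] by rewrite /Av emb_mod.
  have H3 : nat_of_ord x = u %[mod n] by rewrite /= modn_mod.
  have oA : odd (Av v) = eps v by rewrite /Av emb_odd.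
  rewrite /cong vy.
  case: hc => H4; case: rc => rc.
  + left; apply: crt; first by rewrite oddD oA rodd hu; case: (eps v).
    apply: (lin1 (csum H1 (csum H4 H3))).
    rewrite rc; clear -rc rle hl n3; lia.
  + right; apply: crt; first by rewrite oddD oA rodd hu; case: (eps v).
    apply: (lin1 (csum (esym H1) (csum (esym H4) (csum (esym H3) H5)))).
    rewrite rc; clear -rc rle hl n3; lia.
  + right; apply: crt; first by rewrite oddD oA rodd hu; case: (eps v).
    apply: (lin1 (csum (esym H3) (csum H4 (esym H1)))).
    rewrite rc; clear -rc rle hl n3; lia.
  + left; apply: crt; first by rewrite oddD oA rodd hu; case: (eps v).
    apply: (lin1 (csum H1 (csum (esym H4) (csum H3 H5)))).
    rewrite rc; clear -rc rle hl n3; lia.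
Qed.

Lemma eids2 : ext_irr_dom (cycle_rel (2 * n)) S2 lam2.
Proof.
split; [exact: lam2_inj | | exact: cover].
by have [y hy hl] := S2_zero; exists y.
Qed.

End Constr.

Lemma exists_s (n : nat) (S : {set 'I_n}) (lam : 'I_n -> nat) :
  odd n -> 3 <= n -> ext_irr_dom (cycle_rel n) S lam ->
  exists s, s < n /\ forall v, v \in S' n S lam -> (v + v) %% n != s.
Proof.
move=> nodd n3 hS.
have n0 : 0 < n by apply: leq_trans n3.
pose h (v : 'I_n) : 'I_n := Ordinal (ltn_pmod (v + v) n0).
pose g (v : 'I_n) : 'I_n := Ordinal (ltn_pmod (lam v) n0).
have n1 : n.-1 < n by lia.
pose w0 : 'I_n := Ordinal n1.
have ginj : {in S' n S lam &, injective g}.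
  move=> v w hv hw /(congr1 val) /=.
  have [hvS lv] := inS' n nodd S lam v hv; have [hwS lw] := inS' n nodd S lam w hw.
  rewrite !modn_small; try lia.
  by case: hS => hinj _ _ e; apply: hinj.
have gsub : g @: S' n S lam \subset [set~ w0].
  apply/subsetP => y /imsetP [v hv ->]; rewrite !inE.
  apply/negP => /eqP /(congr1 val) /=.
  have [hvS lv] := inS' n nodd S lam v hv.
  rewrite modn_small; lia.
have c1 : #|S' n S lam| <= n.-1.
  rewrite -(card_in_imset ginj).
  by have := subset_leq_card gsub; rewrite cardsC1 card_ord.
have : ~~ ([set: 'I_n] \subset h @: S' n S lam).
  apply/negP => /subset_leq_card; rewrite cardsT card_ord => c2.
  have := leq_trans c2 (leq_trans (leq_imset_card h _) c1).
  by rewrite leqNgt ltn_predL n0.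
case/subsetPn => s _ hs.
exists s; split; first exact: ltn_ord.
move=> v hv; apply/negP => /eqP e.
move: hs; have -> : s = h v by apply: val_inj; rewrite /= e.
by rewrite imset_f.
Qed.

Lemma get_opt (T : finType) (e : rel T) (k : nat) :
  forall (S : {set T}) (lam : T -> nat), ext_irr_dom e S lam -> #|S| <= k ->
  admits_optimal_eids e.
Proof.
elim: k => [|k IH] S lam h hk;
 (case: (classic (exists S' lam', ext_irr_dom e S' lam' /\ #|S'| < #|S|)) =>
   [[S' [lam' [h' hlt]]] | hno]).
- lia.
- exists S, lam; split => // S' lam' h'; rewrite leqNgt; apply/negP => lt.
  by apply: hno; exists S', lam'.
- apply: (IH S' lam' h'); lia.
- exists S, lam; split => // S' lam' h'; rewrite leqNgt; apply/negP => lt.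
  by apply: hno; exists S', lam'.
Qed.

Theorem proposition4p8 (n : nat) :
  odd n -> 3 <= n ->
  admits_optimal_eids (cycle_rel n) -> admits_optimal_eids (cycle_rel (2 * n)).
Proof.
move=> nodd n3 [S [lam [hS _]]].
have [s [hs hok]] := @exists_s n S lam nodd n3 hS.
have H := @eids2 n nodd n3 S lam hS s hs hok.
exact: (@get_opt _ _ _ _ _ H (leqnn _)).
Qed.
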